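(* Let $n\ge 2$ and $m\in\mathbb{N}$. Let $$\mathrm{dom}(\mathcal{L})=\Big\{(d,b)\in\mathbb{R}^m\times\mathbb{R}^m:\ d_j>0,\ b_j>0,\ \sum_{j=1}^m b_j<1,\ \sigma_1<\sigma_2<\dots<\sigma_m\Big\},$$ where $\sigma_j=\kappa d_j^{n-2}/(4b_j)$ if $n>2$ and $\sigma_j=\pi d_j/(2b_j)$ if $n=2$, and let $\mathcal{L}(d,b)=(\sigma,\mu)$ with $\sigma=(\sigma_1,\dots,\sigma_m)$ and $\mu=(\mu_1,\dots,\mu_m)$, where $\mu_1<\dots<\mu_m$ are the roots of $$1+\sum_{j=1}^m\frac{\sigma_j b_j}{(1-\sum_{i=1}^m b_i)(\sigma_j-\lambda)}=0.$$ Then $\mathcal{L}$ is a bijection of $\mathrm{dom}(\mathcal{L})$ onto $$\mathcal{G}=\{(\sigma,\mu)\in\mathbb{R}^m\times\mathbb{R}^m:\ \sigma_j<\mu_j<\sigma_{j+1}\ (j=1,\dots,m-1),\ \sigma_m<\mu_m<\infty\}$$ (where also $\sigma_1>0$ for elements of the image), and the inverse is given by $$b_j=\frac{\rho_j}{1+\sum_{i=1}^m\rho_i},\qquad d_j=\begin{cases}\Big(\dfrac{4\sigma_j\rho_j}{\kappa(1+\sum_{i=1}^m\rho_i)}\Big)^{1/(n-2)},&n>2,\\[2mm] \dfrac{2\sigma_j\rho_j}{\pi(1+\sum_{i=1}^m\rho_i)},&n=2,\end{cases}$$ where $$\rho_j=\frac{\mu_j-\sigma_j}{\sigma_j}\prod_{i\in\{1,\dots,m\},\,i\ne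 j}\frac{\mu_i-\sigma_j}{\sigma_i-\sigma_j}.$$
   Context: For $n>2$, $\kappa$ is the capacity of the disc $T=\{x\in\mathbb{R}^n:|x|<1,\ x_n=0\}$: $\kappa=\inf\int_{\mathbb{R}^n}|\nabla w|^2dx$ over smooth compactly supported $w$ with $w=1$ on $T$. When $0<\sigma_1<\dots<\sigma_m$ and $b_j>0$, $\sum b_j<1$, the displayed equation in $\lambda$ has exactly $m$ roots, all real, interlacing as $\sigma_j<\mu_j<\sigma_{j+1}$, $\sigma_m<\mu_m$. *)

(* Defs.v *)
From Stdlib Require Import Reals.
Open Scope R_scope.

(* Vectors in R^m are functions nat -> R; only indices 0..m-1 matter
   (index j here corresponds to index j+1 in the paper). *)

Fixpoint sumR (m : nat) (f : nat -> R) : R :=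
  match m with
  | O => 0
  | S k => sumR k f + f k
  end.

Fixpoint prod_except (m j : nat) (f : nat -> R) : R :=
  match m with
  | O => 1
  | S k => if Nat.eqb k j then prod_except k j f else prod_except k j f * f k
  end.

(* sigma_j as a function of d_j, b_j; kappa = capacity of the unit disc (n>2) *)
Definition sigma_of (n : nat) (kappa dj bj : R) : R :=
  if Nat.ltb 2 n then kappa * dj ^ (n - 2) / (4 * bj)
  else PI * dj / (2 * bj).

Definition in_dom (n m : nat) (kappa : R) (d b : nat -> R) : Prop :=
  (forall j, (j < m)%nat -> 0 < d j /\ 0 < b j) /\
  sumR m b < 1 /\
  (forall i j, (i < j < m)%nat ->
     sigma_of n kappa (d i) (b i) < sigma_of n kappa (d j) (b j)).

Definition secular (m : nat) (sigma b : nat -> R) (lam : R) : R :=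
  1 + sumR m (fun j => sigma j * b j / ((1 - sumR m b) * (sigma j - lam))).

Definition are_roots (m : nat) (sigma b mu : nat -> R) : Prop :=
  (forall i j, (i < j < m)%nat -> mu i < mu j) /\
  (forall j k, (j < m)%nat -> (k < m)%nat -> mu j <> sigma k) /\
  (forall lam, (forall k, (k < m)%nat -> lam <> sigma k) ->
     (secular m sigma b lam = 0 <-> exists j, (j < m)%nat /\ lam = mu j)).

Definition in_G (m : nat) (sigma mu : nat -> R) : Prop :=
  (forall j, (0 < m)%nat -> j = O -> 0 < sigma j) /\
  (forall j, (j + 1 < m)%nat -> sigma j < mu j /\ mu j < sigma (j + 1)%nat) /\
  (forall j, (j + 1 = m)%nat -> sigma j < mu j).

Definition rho (m : nat) (sigma mu : nat -> R) (j : nat) : R :=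
  (mu j - sigma j) / sigma j *
  prod_except m j (fun i => (mu i - sigma j) / (sigma i - sigma j)).

Definition inv_b (m : nat) (sigma mu : nat -> R) (j : nat) : R :=
  rho m sigma mu j / (1 + sumR m (rho m sigma mu)).

Definition inv_d (n m : nat) (kappa : R) (sigma mu : nat -> R) (j : nat) : R :=
  if Nat.ltb 2 n then
    Rpower (4 * sigma j * rho m sigma mu j / (kappa * (1 + sumR m (rho m sigma mu))))
           (1 / INR (n - 2))
  else 2 * sigma j * rho m sigma mu j / (PI * (1 + sumR m (rho m sigma mu))).

(* Main.v *)
Require Import Defs.
From Stdlib Require Import Reals Lra Lia Psatz IndefiniteDescription.
Open Scope R_scope.

Lemma sumR_ext m f g : (forall j, (j<m)%nat -> f j = g j) -> sumR m f = sumR m g.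
Proof. induction m; simpl; intros; auto. rewrite IHm by (intros; apply H; lia). rewrite H by lia. reflexivity. Qed.

Lemma sumR_plus m f g : sumR m (fun j => f j + g j) = sumR m f + sumR m g.
Proof. induction m; simpl; [lra| rewrite IHm; lra]. Qed.

Lemma sumR_scal m c f : sumR m (fun j => c * f j) = c * sumR m f.
Proof. induction m; simpl; [lra| rewrite IHm; lra]. Qed.

Lemma sumR_zero m f : (forall j, (j<m)%nat -> f j = 0) -> sumR m f = 0.
Proof. induction m; simpl; intros; auto. rewrite IHm by (intros; apply H; lia). rewrite H by lia. lra. Qed.

Lemma sumR_le m f g : (forall j, (j<m)%nat -> f j <= g j) -> sumR m f <= sumR m g.
Proof. induction m; simpl; intros; [lra|]. assert (f m <= g m) by (apply H; lia).
  assert (sumR m f <= sumR m g) by (apply IHm; intros; apply H; lia). lra. Qed.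

Lemma sumR_lt m f g : (0<m)%nat -> (forall j, (j<m)%nat -> f j < g j) -> sumR m f < sumR m g.
Proof. destruct m; [lia|]. intros _ H. simpl. assert (f m < g m) by (apply H; lia).
  assert (sumR m f <= sumR m g) by (apply sumR_le; intros; left; apply H; lia). lra. Qed.

Lemma sumR_nonneg m f : (forall j, (j<m)%nat -> 0 <= f j) -> 0 <= sumR m f.
Proof. intros. replace 0 with (sumR m (fun _ => 0)) by (apply sumR_zero; auto). apply sumR_le; auto. Qed.

Lemma sumR_single m j f : (j<m)%nat -> (forall i, (i<m)%nat -> i<>j -> f i = 0) -> sumR m f = f j.
Proof. induction m; intros; [lia|]. simpl. destruct (Nat.eq_dec m j).
  - subst. rewrite sumR_zero; [lra|intros; apply H0; lia].
  - rewrite IHm by (try lia; intros; apply H0; lia). rewrite (H0 m) by lia. lra. Qed.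

Fixpoint prodR (m : nat) (f : nat -> R) : R :=
  match m with O => 1 | S k => prodR k f * f k end.

Lemma prod_except_ge m j f : (m <= j)%nat -> prod_except m j f = prodR m f.
Proof. induction m; simpl; auto; intros. destruct (Nat.eqb_spec m j); [lia|]. rewrite IHm by lia; auto. Qed.

Lemma prod_except_S m j f : (j < m)%nat -> prod_except (S m) j f = prod_except m j f * f m.
Proof. intros. simpl. destruct (Nat.eqb_spec m j); [lia| auto]. Qed.

Lemma prod_except_Sj j f : prod_except (S j) j f = prodR j f.
Proof. simpl; rewrite Nat.eqb_refl; apply prod_except_ge; lia. Qed.

Lemma prod_except_mul m j f : (j<m)%nat -> prod_except m j f * f j = prodR m f.
Proof. induction m; [lia|]. intros. destruct (Nat.eq_dec j m).
  - subst. rewrite prod_except_Sj. reflexivity.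
  - rewrite prod_except_S by lia. simpl. rewrite <- IHm by lia. ring. Qed.

Lemma prodR_zero m f : prodR m f = 0 <-> exists i, (i<m)%nat /\ f i = 0.
Proof. induction m; simpl; split; intros.
  - lra.
  - destruct H as [i [Hi _]]; lia.
  - destruct (Rmult_integral _ _ H). destruct (proj1 IHm H0) as [i [Hi Hf]]. exists i; split; auto; lia.
    exists m; split; auto.
  - destruct H as [i [Hi Hf]]. destruct (Nat.eq_dec i m). subst; rewrite Hf; ring.
    rewrite (proj2 IHm) by (exists i; split; auto; lia). ring. Qed.

Lemma prodR_pos m f : (forall i, (i<m)%nat -> 0 < f i) -> 0 < prodR m f.
Proof. induction m; simpl; intros; [lra|]. apply Rmult_lt_0_compat; [apply IHm; intros|]; apply H; lia. Qed.

Lemma prod_except_pos m j f : (forall i, (i<m)%nat -> i <> j -> 0 < f i) -> 0 < prod_except m j f.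
Proof. induction m; simpl; intros; [lra|]. destruct (Nat.eqb_spec m j).
  apply IHm; intros; apply H; lia.
  apply Rmult_lt_0_compat; [apply IHm; intros|]; apply H; lia. Qed.

Lemma prod_except_zero m j f i : (i<m)%nat -> i<>j -> f i = 0 -> prod_except m j f = 0.
Proof. induction m; intros; [lia|]. simpl. destruct (Nat.eqb_spec m j).
  - subst. apply IHm; lia || auto.
  - destruct (Nat.eq_dec i m). subst; rewrite H1; ring. rewrite IHm by (lia || auto); ring. Qed.

Lemma prodR_sign m f : (forall k, (k<m)%nat -> f k < 0) -> 0 < prodR m f * (-1)^m.
Proof. induction m; simpl; intros; [lra|].
  assert (0 < prodR m f * (-1)^m) by (apply IHm; intros; apply H; lia).
  assert (f m < 0) by (apply H; lia).
  replace (prodR m f * f m * (-1 * (-1)^m)) with ((prodR m f * (-1)^m) * (- f m)) by ring.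
  apply Rmult_lt_0_compat; lra. Qed.

Lemma prod_except_sign m j f : (j<m)%nat -> (forall k, (k<j)%nat -> f k<0) ->
  (forall k, (j<k<m)%nat -> 0<f k) -> 0 < prod_except m j f * (-1)^j.
Proof. induction m; intros; [lia|]. destruct (Nat.eq_dec j m).
  - subst. rewrite prod_except_Sj. apply prodR_sign; auto.
  - rewrite prod_except_S by lia.
    assert (0 < prod_except m j f * (-1)^j) by (apply IHm; auto; try lia; intros; apply H1; lia).
    assert (0 < f m) by (apply H1; lia).
    replace (prod_except m j f * f m * (-1)^j) with ((prod_except m j f * (-1)^j) * f m) by ring.
    apply Rmult_lt_0_compat; lra. Qed.

Lemma cont_sum m (F : nat -> R -> R) : (forall j x, continuity_pt (F j) x) ->
  forall x, continuity_pt (fun l => sumR m (fun j => F j l)) x.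
Proof. intros HF; induction m; simpl; intros.
  - apply continuity_pt_const. intros a b; reflexivity.
  - apply (continuity_pt_plus (fun l => sumR m (fun j => F j l)) (F m)); auto. Qed.

Lemma cont_prod_except m j (F : nat -> R -> R) : (forall i x, continuity_pt (F i) x) ->
  forall x, continuity_pt (fun l => prod_except m j (fun i => F i l)) x.
Proof. intros HF; induction m; simpl; intros.
  - apply continuity_pt_const. intros a b; reflexivity.
  - destruct (Nat.eqb m j). auto.
    apply (continuity_pt_mult (fun l => prod_except m j (fun i => F i l)) (F m)); auto. Qed.

Lemma cont_prodR m (F : nat -> R -> R) : (forall i x, continuity_pt (F i) x) ->
  forall x, continuity_pt (fun l => prodR m (fun i => F i l)) x.
Proof. intros HF; induction m; simpl; intros.
  - apply continuity_pt_const. intros a b; reflexivity.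
  - apply (continuity_pt_mult (fun l => prodR m (fun i => F i l)) (F m)); auto. Qed.

Lemma cont_lin (a : R) x : continuity_pt (fun l => a - l) x.
Proof. apply (continuity_pt_minus (fun _ => a) (fun l => l)).
  apply continuity_pt_const; intros u v; reflexivity. apply derivable_continuous_pt, derivable_pt_id. Qed.

Definition Acoef m (s u : nat -> R) j :=
  (u j - s j) * prod_except m j (fun i => (u i - s j)/(s i - s j)).

Lemma pf m s u : (forall i j, (i<m)%nat -> (j<m)%nat -> i<>j -> s i <> s j) ->
  forall lam, (forall i, (i<m)%nat -> lam <> s i) ->
  1 + sumR m (fun j => Acoef m s u j / (s j - lam)) = prodR m (fun i => (u i - lam)/(s i - lam)).
Proof.
  induction m; intros Hs lam Hl; simpl; [lra|].
  assert (IH := IHm (fun i j Hi Hj => Hs i j ltac:(lia) ltac:(lia))).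
  rewrite <- IH by (intros; apply Hl; lia).
  assert (Hm : forall i, (i < m)%nat -> s m <> s i) by (intros; apply Hs; lia).
  assert (Hlm : lam <> s m) by (apply Hl; lia).
  unfold Acoef at 2. rewrite prod_except_Sj.
  rewrite <- (IH (s m)) by (intros; auto).
  rewrite (sumR_ext m _ (fun j => ((u m - lam)/(s m - lam)) * (Acoef m s u j / (s j - lam)) +
     (-(u m - s m)/(s m - lam)) * (Acoef m s u j / (s j - s m)))).
  2:{ intros j Hj. unfold Acoef. rewrite prod_except_S by lia.
      assert (s j <> s m) by (intro; apply (Hm j); auto).
      assert (lam <> s j) by (apply Hl; lia).
      field. repeat split; intro; try lra. }
  rewrite sumR_plus, !sumR_scal. field. intro; lra.
Qed.

Lemma cauchy m : forall (s u e : nat -> R),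
  (forall i j, (i<m)%nat -> (j<m)%nat -> i<>j -> s i <> s j) ->
  (forall i j, (i<m)%nat -> (j<m)%nat -> i<>j -> u i <> u j) ->
  (forall i j, (i<m)%nat -> (j<m)%nat -> s i <> u j) ->
  (forall k, (k<m)%nat -> sumR m (fun j => e j / (s j - u k)) = 0) ->
  forall j, (j<m)%nat -> e j = 0.
Proof.
  induction m; intros s u e Hs Hu Hsu He; [intros; lia|].
  set (f := fun j => e j * (s m - s j)).
  set (T := sumR (S m) e).
  assert (K : forall k, (k <= m)%nat -> T + sumR m (fun j => f j / (s j - u k)) = 0).
  { intros k Hk.
    assert (Hk' := He k ltac:(lia)).
    assert (Hsk : s m <> u k) by (apply Hsu; lia).
    assert (E : sumR (S m) (fun j => e j / (s j - u k)) * (s m - u k) = T + sumR m (fun j => f j / (s j - u k))).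
    { rewrite Rmult_comm, <- sumR_scal.
      rewrite (sumR_ext (S m) _ (fun j => e j + f j / (s j - u k))).
      2:{ intros j Hj. assert (s j <> u k) by (apply Hsu; lia). unfold f. field. intro; lra. }
      rewrite sumR_plus. unfold T. f_equal. change (sumR (S m) ?g) with (sumR m g + g m).
      unfold f. replace (s m - s m) with 0 by ring. unfold Rdiv; ring. }
    rewrite <- E, Hk'. ring. }
  assert (Hf : forall j, (j<m)%nat -> f j / (s j - u m) = 0).
  { apply (IHm s u (fun j => f j / (s j - u m))).
    - intros; apply Hs; lia.
    - intros; apply Hu; lia.
    - intros; apply Hsu; lia.
    - intros k Hk.
      assert (Hkm : u k <> u m) by (apply Hu; lia).
      rewrite (sumR_ext m _ (fun j => / (u k - u m) * (f j / (s j - u k)) + (- / (u k - u m)) * (f j / (s j - u m)))).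
      2:{ intros j Hj. assert (s j <> u k) by (apply Hsu; lia). assert (s j <> u m) by (apply Hsu; lia).
          field. repeat split; intro; lra. }
      rewrite sumR_plus, !sumR_scal.
      assert (A1 := K k ltac:(lia)). assert (A2 := K m ltac:(lia)).
      replace (sumR m (fun j => f j / (s j - u k))) with (-T) by lra.
      replace (sumR m (fun j => f j / (s j - u m))) with (-T) by lra. ring. }
  assert (Hej : forall j, (j<m)%nat -> e j = 0).
  { intros j Hj. assert (H1 := Hf j Hj). assert (s j <> u m) by (apply Hsu; lia).
    assert (s m <> s j) by (apply Hs; lia). unfold f in H1.
    assert (e j * (s m - s j) = 0).
    { replace (e j * (s m - s j)) with (e j * (s m - s j) / (s j - u m) * (s j - u m)) by (field; intro; lra).
      rewrite H1; ring. }
    destruct (Rmult_integral _ _ H2); auto. lra. }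
  intros j Hj. destruct (Nat.eq_dec j m); [|apply Hej; lia]. subst.
  assert (H0 := He m ltac:(lia)). simpl in H0.
  rewrite sumR_zero in H0 by (intros i Hi; rewrite Hej by lia; unfold Rdiv; ring).
  assert (s m <> u m) by (apply Hsu; lia).
  replace (e m) with (e m / (s m - u m) * (s m - u m)) by (field; intro; lra).
  assert (Hz : e m / (s m - u m) = 0) by lra. rewrite Hz; ring.
Qed.

Lemma G_facts m s u : in_G m s u ->
  (forall i k, (i<k<m)%nat -> s i < s k /\ u i < s k) /\
  (forall i, (i<m)%nat -> s i < u i) /\ (forall i, (i<m)%nat -> 0 < s i).
Proof.
  intros [H0 [H1 H2]].
  assert (A : forall d i, (i + S d < m)%nat -> s i < s (i + S d)%nat /\ u i < s (i + S d)%nat).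
  { induction d; intros i Hi.
    - destruct (H1 i) as [a b]; [lia|]. replace (i + 1)%nat with (i + 1)%nat in b by lia.
      replace (i + S 0)%nat with (i + 1)%nat by lia. lra.
    - destruct (IHd i) as [a b]; [lia|]. destruct (H1 (i + S d)%nat) as [c e]; [lia|].
      replace (i + S d + 1)%nat with (i + S (S d))%nat in e by lia. lra. }
  assert (B : forall i k, (i<k<m)%nat -> s i < s k /\ u i < s k).
  { intros i k Hik. replace k with (i + S (k - i - 1))%nat by lia. apply A. lia. }
  assert (C : forall i, (i<m)%nat -> s i < u i).
  { intros i Hi. destruct (Nat.eq_dec (i+1) m). apply H2; auto. apply H1; lia. }
  split; [|split]; auto.
  intros i Hi. assert (0 < s 0%nat) by (apply (H0 0%nat); lia || auto).
  destruct i; auto. destruct (B 0%nat (S i)) as [a _]; lia || lra.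
Qed.

Lemma div_neg_neg x y : x < 0 -> y < 0 -> 0 < x / y.
Proof. intros. assert (/y < 0) by (apply Rinv_lt_0_compat; lra). unfold Rdiv; nra. Qed.

Lemma rho_pos m s u j : in_G m s u -> (j<m)%nat -> 0 < rho m s u j.
Proof.
  intros HG Hj. destruct (G_facts m s u HG) as [B [C D]]. unfold rho.
  apply Rmult_lt_0_compat.
  - assert (s j < u j) by auto. assert (0 < s j) by auto. apply Rdiv_lt_0_compat; lra.
  - apply prod_except_pos. intros i Hi Hij. destruct (Nat.lt_ge_cases i j).
    + destruct (B i j) as [a b]; [lia|]. apply div_neg_neg; lra.
    + destruct (B j i) as [a b]; [lia|]. assert (s i < u i) by auto. apply Rdiv_lt_0_compat; lra.
Qed.

Lemma sumR_inv_b m s u : sumR m (inv_b m s u) =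
  sumR m (rho m s u) / (1 + sumR m (rho m s u)).
Proof.
  unfold inv_b. rewrite (sumR_ext m _ (fun j => / (1 + sumR m (rho m s u)) * rho m s u j)).
  rewrite sumR_scal. unfold Rdiv; ring. intros; unfold Rdiv; ring. Qed.

Lemma INR_sub_ne0 n : (2 < n)%nat -> INR (n - 2) <> 0.
Proof. intros. apply not_0_INR. lia. Qed.

Lemma Rpower_root x k : 0 < x -> (0 < k)%nat -> Rpower x (1 / INR k) ^ k = x.
Proof.
  intros. rewrite <- Rpower_pow by (unfold Rpower; apply exp_pos).
  rewrite Rpower_mult. replace (1 / INR k * INR k) with 1. apply Rpower_1; auto.
  field. apply not_0_INR; lia. Qed.

Lemma part3 n m kappa : (2 <= n)%nat -> 0 < kappa -> forall sigma mu : nat -> R, in_G m sigma mu ->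
     in_dom n m kappa (inv_d n m kappa sigma mu) (inv_b m sigma mu) /\
     (forall j, (j < m)%nat ->
        sigma_of n kappa (inv_d n m kappa sigma mu j) (inv_b m sigma mu j) = sigma j) /\
     are_roots m sigma (inv_b m sigma mu) mu.
Proof.
  intros hn hk s u HG.
  destruct (G_facts m s u HG) as [B [C D]].
  set (S := sumR m (rho m s u)).
  assert (HS : 0 <= S) by (apply sumR_nonneg; intros; left; apply rho_pos; auto).
  assert (Hr : forall j, (j<m)%nat -> 0 < rho m s u j) by (intros; apply rho_pos; auto).
  assert (Hb : forall j, (j<m)%nat -> 0 < inv_b m s u j).
  { intros. unfold inv_b. fold S. apply Rdiv_lt_0_compat; auto. lra. }
  assert (Hsig : forall j, (j < m)%nat ->
        sigma_of n kappa (inv_d n m kappa s u j) (inv_b m s u j) = s j).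
  { intros j Hj. assert (Rj := Hr j Hj). assert (Sj := D j Hj).
    unfold sigma_of, inv_d, inv_b. fold S. destruct (Nat.ltb_spec 2 n).
    - rewrite Rpower_root by (first [lia | (apply Rdiv_lt_0_compat; [|apply Rmult_lt_0_compat]; nra)]).
      field. repeat split; lra.
    - assert (PI <> 0) by apply PI_neq0. field. repeat split; lra. }
  split; [|split; auto].
  - split; [|split].
    + intros j Hj. split; auto. unfold inv_d. fold S. assert (Rj := Hr j Hj). assert (Sj := D j Hj).
      destruct (Nat.ltb 2 n). unfold Rpower; apply exp_pos.
      apply Rdiv_lt_0_compat; [nra|]. apply Rmult_lt_0_compat; [apply PI_RGT_0|lra].
    + rewrite sumR_inv_b. fold S. apply (Rmult_lt_reg_r (1+S)); [lra|]. field_simplify; lra.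
    + intros i j Hij. rewrite !Hsig by lia. apply B; auto.
  - split; [|split].
    + intros i j Hij. destruct (B i j Hij). assert (s j < u j) by (apply C; lia). lra.
    + intros j k Hj Hk Heq. destruct (Nat.lt_ge_cases j k).
      destruct (B j k); [lia|]. lra.
      assert (s j < u j) by auto. destruct (Nat.eq_dec k j). subst; lra.
      destruct (B k j); [lia|]. lra.
    + intros lam Hlam.
      assert (E : secular m s (inv_b m s u) lam = prodR m (fun i => (u i - lam)/(s i - lam))).
      { rewrite <- pf.
        2:{ intros i j Hi Hj Hij. destruct (Nat.lt_ge_cases i j).
            destruct (B i j); [lia|]; lra. destruct (B j i); [lia|]; lra. }
        2:{ intros i Hi; apply Hlam; auto. }
        unfold secular. f_equal. rewrite sumR_inv_b. fold S. apply sumR_ext. intros j Hj.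
        unfold inv_b. fold S. unfold rho, Acoef. assert (Sj := D j Hj). assert (lam <> s j) by auto.
        field. repeat split; try lra. }
      rewrite E, prodR_zero. split.
      * intros [i [Hi Hz]]. exists i; split; auto.
        assert (lam <> s i) by auto.
        assert (u i - lam = 0).
        { replace (u i - lam) with ((u i - lam)/(s i - lam) * (s i - lam)) by (field; lra).
          rewrite Hz; ring. }
        lra.
      * intros [j [Hj ->]]. exists j; split; auto. unfold Rdiv; ring.
Qed.

Lemma sigma_pos n kappa x y : 0 < kappa -> 0 < x -> 0 < y -> 0 < sigma_of n kappa x y.
Proof. intros. unfold sigma_of. destruct (Nat.ltb 2 n).
  apply Rdiv_lt_0_compat; [apply Rmult_lt_0_compat; auto; apply pow_lt; auto | lra].
  apply Rdiv_lt_0_compat; [apply Rmult_lt_0_compat; auto; apply PI_RGT_0 | lra]. Qed.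

Lemma secular_c m s b lam : sumR m b < 1 -> (forall j, (j<m)%nat -> s j <> lam) ->
  secular m s b lam = 1 + sumR m (fun j => (s j * b j / (1 - sumR m b)) / (s j - lam)).
Proof. intros. unfold secular. f_equal. apply sumR_ext. intros j Hj.
  assert (s j <> lam) by auto. field. split; lra. Qed.

Lemma pow_strict x y k : 0 < x < y -> (0 < k)%nat -> x ^ k < y ^ k.
Proof. intros [Hx Hy] Hk. induction k; [lia|]. destruct k. simpl; lra.
  assert (x ^ S k < y ^ S k) by (apply IHk; lia).
  assert (0 < x ^ S k) by (apply pow_lt; auto).
  change (x * x ^ S k < y * y ^ S k). nra. Qed.

Lemma pow_inj x y k : 0 < x -> 0 < y -> (0 < k)%nat -> x ^ k = y ^ k -> x = y.
Proof. intros. destruct (Rtotal_order x y) as [h|[h|h]]; auto.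
  assert (x^k < y^k) by (apply pow_strict; auto). lra.
  assert (y^k < x^k) by (apply pow_strict; auto). lra. Qed.

Lemma part2 n m kappa : (2 <= n)%nat -> 0 < kappa ->
  (forall (d b d' b' mu : nat -> R), in_dom n m kappa d b -> in_dom n m kappa d' b' ->
     (forall j, (j < m)%nat -> sigma_of n kappa (d j) (b j) = sigma_of n kappa (d' j) (b' j)) ->
     are_roots m (fun j => sigma_of n kappa (d j) (b j)) b mu ->
     are_roots m (fun j => sigma_of n kappa (d' j) (b' j)) b' mu ->
     forall j, (j < m)%nat -> d j = d' j /\ b j = b' j).
Proof.
  intros hn hk d b d' b' u [Hp [HB Hs]] [Hp' [HB' Hs']] Heq [Hu [Hus Hr]] [_ [Hus' Hr']].
  set (s := fun j => sigma_of n kappa (d j) (b j)) in *.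
  set (B := sumR m b) in *. set (B' := sumR m b') in *.
  assert (Hspos : forall j, (j<m)%nat -> 0 < s j) by (intros j Hj; destruct (Hp j Hj); apply sigma_pos; auto).
  assert (E : forall j, (j<m)%nat -> s j * b j / (1 - B) - s j * b' j / (1 - B') = 0).
  { apply (cauchy m s u).
    - intros i j Hi Hj Hij. destruct (Nat.lt_ge_cases i j).
      assert (s i < s j) by (apply Hs; lia). lra.
      assert (s j < s i) by (apply Hs; lia). lra.
    - intros i j Hi Hj Hij. destruct (Nat.lt_ge_cases i j).
      assert (u i < u j) by (apply Hu; lia). lra.
      assert (u j < u i) by (apply Hu; lia). lra.
    - intros i j Hi Hj. intro. apply (Hus j i Hj Hi). auto.
    - intros k Hk.
      assert (G1 : secular m s b (u k) = 0).
      { apply Hr. intros; apply Hus; auto. exists k; auto. }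
      assert (G2 : secular m (fun j => sigma_of n kappa (d' j) (b' j)) b' (u k) = 0).
      { apply Hr'. intros; apply Hus'; auto. exists k; auto. }
      rewrite secular_c in G1 by (auto; intros j Hj; intro; apply (Hus k j Hk Hj); auto).
      rewrite secular_c in G2 by (auto; intros j Hj; intro; apply (Hus' k j Hk Hj); auto).
      rewrite (sumR_ext m _ (fun j => s j * b' j / (1 - sumR m b') / (s j - u k))) in G2
        by (intros j Hj; rewrite <- Heq by auto; reflexivity).
      fold B in G1. fold B' in G2.
      rewrite (sumR_ext m _ (fun j => s j * b j / (1 - B) / (s j - u k) + (-1) * (s j * b' j / (1 - B') / (s j - u k)))).
      rewrite sumR_plus, sumR_scal. lra.
      intros j Hj. assert (s j <> u k) by (intro; apply (Hus k j Hk Hj); auto). field. repeat split; lra. }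
  assert (E2 : forall j, (j<m)%nat -> b j / (1 - B) = b' j / (1 - B')).
  { intros j Hj. assert (Ej := E j Hj). assert (Sj := Hspos j Hj).
    apply (Rmult_eq_reg_l (s j)); [|lra].
    replace (s j * (b j / (1 - B))) with (s j * b j / (1 - B)) by (field; lra).
    replace (s j * (b' j / (1 - B'))) with (s j * b' j / (1 - B')) by (field; lra). lra. }
  assert (EB : B = B').
  { assert (sumR m (fun j => / (1 - B) * b j) = sumR m (fun j => / (1 - B') * b' j)).
    { apply sumR_ext. intros j Hj. rewrite Rmult_comm, (Rmult_comm _ (b' j)). apply E2; auto. }
    rewrite !sumR_scal in H. fold B B' in H.
    assert (B * (1 - B') = B' * (1 - B)).
    { replace (B * (1 - B')) with (/ (1 - B) * B * ((1 - B) * (1 - B'))) by (field; lra).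
      rewrite H. field. lra. }
    nra. }
  assert (Eb : forall j, (j<m)%nat -> b j = b' j).
  { intros j Hj. assert (Ej := E2 j Hj). rewrite <- EB in Ej.
    replace (b j) with (b j / (1 - B) * (1 - B)) by (field; lra). rewrite Ej. field. lra. }
  intros j Hj. split; [|auto].
  assert (Hj' := Heq j Hj). rewrite <- (Eb j Hj) in Hj'.
  destruct (Hp j Hj) as [dj bj]. destruct (Hp' j Hj) as [dj' _].
  unfold sigma_of in Hj'. destruct (Nat.ltb_spec 2 n).
  - apply (pow_inj _ _ (n - 2)); auto. lia.
    apply (Rmult_eq_reg_l (kappa / (4 * b j))); [|apply Rgt_not_eq, Rdiv_lt_0_compat; lra].
    replace (kappa / (4 * b j) * d j ^ (n - 2)) with (kappa * d j ^ (n - 2) / (4 * b j)) by (field; lra).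
    rewrite Hj'. field. lra.
  - assert (PI <> 0) by apply PI_neq0.
    apply (Rmult_eq_reg_l (PI / (2 * b j))); [|apply Rgt_not_eq, Rdiv_lt_0_compat; [apply PI_RGT_0|lra]].
    replace (PI / (2 * b j) * d j) with (PI * d j / (2 * b j)) by (field; lra).
    rewrite Hj'. field. lra.
Qed.

Definition gfun m (s c : nat -> R) lam := 1 + sumR m (fun j => c j / (s j - lam)).
Definition Gf m (s c : nat -> R) lam :=
  prodR m (fun k => s k - lam) + sumR m (fun j => c j * prod_except m j (fun k => s k - lam)).

Section S.
Variables (m : nat) (s c : nat -> R).
Hypothesis Hs : forall i j, (i<j<m)%nat -> s i < s j.
Hypothesis Hc : forall j, (j<m)%nat -> 0 < c j.

Lemma s_le i j : (i <= j < m)%nat -> s i <= s j.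
Proof. intros. destruct (Nat.eq_dec i j). subst; lra. left; apply Hs; lia. Qed.

Lemma Gf_cont : continuity (Gf m s c).
Proof. intro x. unfold Gf.
  apply (continuity_pt_plus (fun l => prodR m (fun k => s k - l))
     (fun l => sumR m (fun j => c j * prod_except m j (fun k => s k - l)))).
  - apply (cont_prodR m (fun k l => s k - l)). intros; apply cont_lin.
  - apply (cont_sum m (fun j l => c j * prod_except m j (fun k => s k - l))). intros j y.
    apply (continuity_pt_mult (fun _ => c j) (fun l => prod_except m j (fun k => s k - l))).
    apply continuity_pt_const; intros u v; reflexivity.
    apply (cont_prod_except m j (fun k l => s k - l)). intros; apply cont_lin.
Qed.

Lemma Gf_eq lam : (forall k, (k<m)%nat -> lam <> s k) ->
  Gf m s c lam = gfun m s c lam * prodR m (fun k => s k - lam).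
Proof. intros H. unfold Gf, gfun. rewrite Rmult_plus_distr_r, Rmult_1_l. f_equal.
  rewrite Rmult_comm, <- sumR_scal. apply sumR_ext. intros j Hj.
  rewrite <- (prod_except_mul m j (fun k => s k - lam)) by auto.
  assert (lam <> s j) by auto. field. lra. Qed.

Lemma P_ne0 lam : (forall k, (k<m)%nat -> lam <> s k) -> prodR m (fun k => s k - lam) <> 0.
Proof. intros H Hz. apply prodR_zero in Hz. destruct Hz as [i [Hi Hz]]. apply (H i Hi). lra. Qed.

Lemma Gf_at j : (j<m)%nat -> 0 < Gf m s c (s j) * (-1)^j.
Proof. intros Hj. unfold Gf.
  rewrite (proj2 (prodR_zero m (fun k => s k - s j))) by (exists j; split; auto; ring).
  rewrite (sumR_single m j) by (auto; intros i Hi Hij;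
     rewrite (prod_except_zero m i (fun k => s k - s j) j); auto; ring).
  rewrite Rplus_0_l, Rmult_assoc. apply Rmult_lt_0_compat; auto.
  apply prod_except_sign; auto.
  - intros k Hk. assert (s k < s j) by (apply Hs; lia). lra.
  - intros k Hk. assert (s j < s k) by (apply Hs; lia). lra.
Qed.

Lemma term_mono cj sj x y : 0 < cj -> x < y -> (sj < x \/ y < sj) -> cj / (sj - x) < cj / (sj - y).
Proof. intros Hc0 Hxy H.
  assert (0 < (sj - x) * (sj - y)) by (destruct H; nra).
  assert (cj / (sj - y) - cj / (sj - x) = cj * (y - x) / ((sj - x) * (sj - y))).
  { field. split; intro; destruct H; lra. }
  assert (0 < cj * (y - x) / ((sj - x) * (sj - y))).
  { apply Rdiv_lt_0_compat; nra. }
  lra. Qed.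

Lemma g_mono x y : (0 < m)%nat -> x < y -> (forall k, (k<m)%nat -> s k < x \/ y < s k) ->
  gfun m s c x < gfun m s c y.
Proof. intros. unfold gfun. apply Rplus_lt_compat_l. apply sumR_lt; auto.
  intros j Hj. apply term_mono; auto. Qed.

Lemma g_left x : (0<m)%nat -> x < s 0%nat -> 0 < gfun m s c x.
Proof. intros. unfold gfun.
  assert (0 <= sumR m (fun j => c j / (s j - x))).
  { apply sumR_nonneg. intros j Hj. assert (s 0%nat <= s j) by (apply s_le; lia).
    left; apply Rdiv_lt_0_compat; auto. lra. }
  lra. Qed.

Lemma locate lam : (forall k, (k<m)%nat -> lam <> s k) -> forall q, (S q <= m)%nat ->
  lam < s 0%nat \/ (exists j, (S j <= q)%nat /\ s j < lam < s (S j)) \/ s q < lam.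
Proof. intros H q. induction q; intros Hq.
  - assert (lam <> s 0%nat) by (apply H; lia). destruct (Rtotal_order lam (s 0%nat)) as [h|[h|h]]; auto; lra.
  - destruct IHq as [h|[[j [Hj h]]|h]]; [lia| auto | right; left; exists j; split; auto; lia |].
    assert (lam <> s (S q)) by (apply H; lia).
    destruct (Rtotal_order lam (s (S q))) as [h'|[h'|h']]; [|lra|auto].
    right; left; exists q; split; auto.
Qed.

Lemma exists_root j : exists z,
  ((S j < m)%nat -> s j < z < s (S j) /\ gfun m s c z = 0) /\
  ((S j = m)%nat -> s j < z /\ gfun m s c z = 0).
Proof.
  destruct (Nat.lt_ge_cases (S j) m) as [Hj|Hj].
  - assert (A1 := Gf_at j ltac:(lia)). assert (A2 := Gf_at (S j) Hj).
    assert (Hss : s j < s (S j)) by (apply Hs; lia).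
    destruct (IVT (fun l => Gf m s c l * (-1)^(S j)) (s j) (s (S j))) as [z [Hz1 Hz2]]; auto.
    + apply (continuity_mult _ (fun _ => (-1)^(S j))). apply Gf_cont. apply continuity_const; intros u v; reflexivity.
    + simpl. lra.
    + assert (z <> s j). { intro; subst. simpl in Hz2. lra. }
      assert (z <> s (S j)). { intro; subst. lra. }
      assert (Hnk : forall k, (k<m)%nat -> z <> s k).
      { intros k Hk. destruct (Nat.le_gt_cases k j).
        assert (s k <= s j) by (apply s_le; lia). lra.
        assert (s (S j) <= s k) by (apply s_le; lia). lra. }
      exists z. split; [|intros; lia]. intros _. split; [lra|].
      rewrite Gf_eq in Hz2 by auto.
      assert (P_ne := P_ne0 z Hnk). assert (Hp := pow_nonzero (-1) (S j) ltac:(lra)).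
      destruct (Rmult_integral _ _ Hz2) as [h|h]; [|contradiction].
      destruct (Rmult_integral _ _ h); [auto|contradiction].
  - destruct (Nat.eq_dec (S j) m) as [He|He]; [|exists 0; split; intros; lia].
    assert (A1 := Gf_at j ltac:(lia)).
    set (C := sumR m c).
    assert (HC : 0 <= C) by (apply sumR_nonneg; intros; left; auto).
    set (Y := s j + 1 + C).
    assert (HnY : forall k, (k<m)%nat -> Y <> s k /\ 1 + C <= Y - s k).
    { intros k Hk. assert (s k <= s j) by (apply s_le; lia). unfold Y. split; lra. }
    assert (gY : 0 < gfun m s c Y).
    { unfold gfun.
      assert (sumR m (fun k => (- / (1 + C)) * c k) <= sumR m (fun k => c k / (s k - Y))).
      { apply sumR_le. intros k Hk. destruct (HnY k Hk) as [_ h]. assert (Ck := Hc k Hk).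
        replace (c k / (s k - Y)) with (- (c k * / (Y - s k))) by (field; lra).
        replace (- / (1 + C) * c k) with (- (c k * / (1 + C))) by ring.
        apply Ropp_le_contravar. apply Rmult_le_compat_l; [lra|].
        apply Rinv_le_contravar; lra. }
      rewrite sumR_scal in H. fold C in H.
      assert (- / (1 + C) * C = -1 + / (1 + C)) by (field; lra).
      assert (0 < / (1 + C)) by (apply Rinv_0_lt_compat; lra). lra. }
    assert (PY : 0 < prodR m (fun k => s k - Y) * (-1)^m).
    { apply prodR_sign. intros k Hk. destruct (HnY k Hk). lra. }
    assert (Hlt : s j < Y) by (unfold Y; lra).
    destruct (IVT (fun l => Gf m s c l * (-1)^(S j)) (s j) Y) as [z [Hz1 Hz2]]; auto.
    + apply (continuity_mult _ (fun _ => (-1)^(S j))). apply Gf_cont. apply continuity_const; intros u v; reflexivity.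
    + simpl. lra.
    + rewrite Gf_eq by (intros k Hk; apply HnY; auto). rewrite He, Rmult_assoc.
      apply Rmult_lt_0_compat; auto.
    + assert (z <> s j). { intro; subst. simpl in Hz2. lra. }
      assert (Hnk : forall k, (k<m)%nat -> z <> s k).
      { intros k Hk. assert (s k <= s j) by (apply s_le; lia). lra. }
      exists z. split; [intros; lia|]. intros _. split; [lra|].
      rewrite Gf_eq in Hz2 by auto.
      assert (P_ne := P_ne0 z Hnk). assert (Hp := pow_nonzero (-1) (S j) ltac:(lra)).
      destruct (Rmult_integral _ _ Hz2) as [h|h]; [|contradiction].
      destruct (Rmult_integral _ _ h); [auto|contradiction].
Qed.

End S.

Lemma incr_eq m (f g : nat -> R) : (forall i j, (i<j<m)%nat -> f i < f j) ->
  (forall i j, (i<j<m)%nat -> g i < g j) ->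
  (forall j, (j<m)%nat -> exists k, (k<m)%nat /\ f j = g k) ->
  (forall j, (j<m)%nat -> exists k, (k<m)%nat /\ g j = f k) ->
  forall j, (j<m)%nat -> f j = g j.
Proof.
  intros Hf Hg A B.
  assert (forall N j, (j < N)%nat -> (j<m)%nat -> f j = g j).
  { induction N; intros j HjN Hj; [lia|].
    destruct (A j Hj) as [k [Hk Ek]]. destruct (B j Hj) as [k' [Hk' Ek']].
    assert (k >= j)%nat.
    { destruct (Nat.lt_ge_cases k j); auto. rewrite <- IHN in Ek by lia.
      assert (f k < f j) by (apply Hf; lia). lra. }
    assert (k' >= j)%nat.
    { destruct (Nat.lt_ge_cases k' j); auto. rewrite IHN in Ek' by lia.
      assert (g k' < g j) by (apply Hg; lia). lra. }
    assert (g j <= g k) by (destruct (Nat.eq_dec j k); [subst; lra| left; apply Hg; lia]).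
    assert (f j <= f k') by (destruct (Nat.eq_dec j k'); [subst; lra| left; apply Hf; lia]).
    lra. }
  intros j Hj; apply (H (S j)); auto.
Qed.

Lemma part1 n m kappa : (2 <= n)%nat -> 0 < kappa ->
  (forall d b : nat -> R, in_dom n m kappa d b ->
     exists mu : nat -> R,
       are_roots m (fun j => sigma_of n kappa (d j) (b j)) b mu /\
       (forall mu', are_roots m (fun j => sigma_of n kappa (d j) (b j)) b mu' ->
          forall j, (j < m)%nat -> mu' j = mu j) /\
       in_G m (fun j => sigma_of n kappa (d j) (b j)) mu).
Proof.
  intros hn hk d b [Hp [HB Hs]].
  set (s := fun j => sigma_of n kappa (d j) (b j)) in *.
  set (B := sumR m b) in *.
  set (c := fun j => s j * b j / (1 - B)).
  assert (Hspos : forall j, (j<m)%nat -> 0 < s j) by (intros j Hj; destruct (Hp j Hj); apply sigma_pos; auto).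
  assert (Hc : forall j, (j<m)%nat -> 0 < c j).
  { intros j Hj. unfold c. destruct (Hp j Hj). apply Rdiv_lt_0_compat; [|lra]. apply Rmult_lt_0_compat; auto. }
  assert (Hsec : forall lam, (forall k, (k<m)%nat -> lam <> s k) -> secular m s b lam = gfun m s c lam).
  { intros lam H. rewrite secular_c; auto. intros j Hj; intro; apply (H j Hj); auto. }
  assert (Hex := fun j => exists_root m s c Hs Hc j).
  set (mu := fun j => proj1_sig (constructive_indefinite_description _ (Hex j))).
  assert (Hmu : forall j, ((S j < m)%nat -> s j < mu j < s (S j) /\ gfun m s c (mu j) = 0) /\
    ((S j = m)%nat -> s j < mu j /\ gfun m s c (mu j) = 0)).
  { intro j. exact (proj2_sig (constructive_indefinite_description _ (Hex j))). }
  assert (M1 : forall j, (j<m)%nat -> s j < mu j /\ gfun m s c (mu j) = 0).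
  { intros j Hj. destruct (Hmu j) as [A1 A2]. destruct (Nat.eq_dec (S j) m).
    apply A2; auto. destruct A1 as [[x y] z]; [lia|]. split; auto; lra. }
  assert (M2 : forall j, (S j < m)%nat -> mu j < s (S j)).
  { intros j Hj. apply (proj1 (Hmu j)); auto. }
  assert (Hnk : forall j k, (j<m)%nat -> (k<m)%nat -> mu j <> s k).
  { intros j k Hj Hk. destruct (Nat.le_gt_cases k j).
    assert (s k <= s j) by (apply (s_le _ s Hs); lia). assert (s j < mu j) by apply M1, Hj. lra.
    assert (s (S j) <= s k) by (apply (s_le _ s Hs); lia). assert (mu j < s (S j)) by (apply M2; lia). lra. }
  assert (AR : are_roots m s b mu).
  { split; [|split].
    - intros i j Hij. assert (mu i < s (S i)) by (apply M2; lia).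
      assert (s (S i) <= s j) by (apply (s_le _ s Hs); lia). assert (s j < mu j) by (apply M1; lia). lra.
    - intros j k Hj Hk. apply Hnk; auto.
    - intros lam Hlam. rewrite Hsec by auto. split.
      + intros Hg. destruct m as [|m'].
        { unfold gfun in Hg. simpl in Hg. lra. }
        destruct (locate (S m') s lam Hlam m' ltac:(lia)) as [h|[[j [Hj h]]|h]].
        * assert (0 < gfun (S m') s c lam) by (apply g_left; auto; lia). lra.
        * exists j. split; [lia|].
          assert (Mj := M1 j ltac:(lia)). assert (Mj2 := M2 j ltac:(lia)).
          assert (Hout : forall x y, s j < x -> y < s (S j) -> forall k, (k < S m')%nat -> s k < x \/ y < s k).
          { intros x y Hx Hy k Hk. destruct (Nat.le_gt_cases k j).
            left. assert (s k <= s j) by (apply (s_le _ s Hs); lia). lra.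
            right. assert (s (S j) <= s k) by (apply (s_le _ s Hs); lia). lra. }
          destruct (Rtotal_order lam (mu j)) as [o|[o|o]]; auto.
          -- assert (gfun (S m') s c lam < gfun (S m') s c (mu j)) by (apply g_mono; auto; try lia; apply Hout; lra). lra.
          -- assert (gfun (S m') s c (mu j) < gfun (S m') s c lam) by (apply g_mono; auto; try lia; apply Hout; lra). lra.
        * exists m'. split; [lia|].
          assert (Mj := M1 m' ltac:(lia)).
          assert (Hout : forall x y, s m' < x -> forall k, (k < S m')%nat -> s k < x \/ y < s k).
          { intros x y Hx k Hk. left. assert (s k <= s m') by (apply (s_le _ s Hs); lia). lra. }
          destruct (Rtotal_order lam (mu m')) as [o|[o|o]]; auto.
          -- assert (gfun (S m') s c lam < gfun (S m') s c (mu m')) by (apply g_mono; auto; try lia; apply Hout; lra). lra.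
          -- assert (gfun (S m') s c (mu m') < gfun (S m') s c lam) by (apply g_mono; auto; try lia; apply Hout; lra). lra.
      + intros [j [Hj ->]]. apply M1; auto. }
  exists mu. split; [exact AR|split].
  - intros mu' [Hu' [Hn' Hr']] j Hj.
    destruct AR as [Hu [Hn Hr]].
    apply (incr_eq m mu' mu); auto.
    + intros i Hi. apply Hr. intros k Hk; apply Hn'; auto. apply Hr'. intros k Hk; apply Hn'; auto.
      exists i; auto.
    + intros i Hi. apply Hr'. intros k Hk; apply Hn; auto. apply Hr. intros k Hk; apply Hn; auto.
      exists i; auto.
  - split; [|split].
    + intros j Hm ->. apply Hspos; auto.
    + intros j Hj. replace (j+1)%nat with (S j) by lia. split; [apply M1; lia| apply M2; lia].
    + intros j Hj. apply M1. lia.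
Qed.

Theorem lemma1p2 (n m : nat) (kappa : R) (hn : (2 <= n)%nat) (hkappa : 0 < kappa) :
  (* L is well defined on dom(L) and maps it into G *)
  (forall d b : nat -> R, in_dom n m kappa d b ->
     exists mu : nat -> R,
       are_roots m (fun j => sigma_of n kappa (d j) (b j)) b mu /\
       (forall mu', are_roots m (fun j => sigma_of n kappa (d j) (b j)) b mu' ->
          forall j, (j < m)%nat -> mu' j = mu j) /\
       in_G m (fun j => sigma_of n kappa (d j) (b j)) mu) /\
  (* L is injective on dom(L) *)
  (forall (d b d' b' mu : nat -> R), in_dom n m kappa d b -> in_dom n m kappa d' b' ->
     (forall j, (j < m)%nat -> sigma_of n kappa (d j) (b j) = sigma_of n kappa (d' j) (b' j)) ->
     are_roots m (fun j => sigma_of n kappa (d j) (b j)) b mu ->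
     are_roots m (fun j => sigma_of n kappa (d' j) (b' j)) b' mu ->
     forall j, (j < m)%nat -> d j = d' j /\ b j = b' j) /\
  (* L is onto G, with the explicit inverse *)
  (forall sigma mu : nat -> R, in_G m sigma mu ->
     in_dom n m kappa (inv_d n m kappa sigma mu) (inv_b m sigma mu) /\
     (forall j, (j < m)%nat ->
        sigma_of n kappa (inv_d n m kappa sigma mu j) (inv_b m sigma mu j) = sigma j) /\
     are_roots m sigma (inv_b m sigma mu) mu).
Proof.
  split; [apply part1; auto|split; [apply part2; auto|apply part3; auto]].
Qed.
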